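(* Let $h:\mathbb{R}\to\mathbb{R}$ be $h(x):=\big(\frac{\sin(\pi x)}{\pi x}\big)^2$ (with $h(0)=1$), and let $r\ge1$. Then, considering the following functions of $x$ on the interval $[0,1]$: (i) $h(x)+h(x-1)$ has a global minimum at $x=\tfrac12$; (ii) for every $m=1,2,3,\dots$, $h(x+m)+h(x-(m+1))$ has a global maximum at $x=\tfrac12$; (iii) $h(x)+h(x-1)-\big(h(x)^r+h(x-1)^r\big)^{1/r}$ has a global maximum at $x=\tfrac12$; (iv) for every $m=1,2,3,\dots$, $\big(h(x+m)+h(x-(m+1))\big)^r-h(x+m)^r-h(x-(m+1))^r$ has a global maximum at $x=\tfrac12$.
   Context: $h$ is understood as its continuous extension at $x=0$, i.e. $h(0)=1$. *)

(* Defs.v *)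
From Stdlib Require Import Reals.
Open Scope R_scope.

Definition h (x : R) : R :=
  if Req_EM_T x 0 then 1 else (sin (PI * x) / (PI * x)) ^ 2.

Definition rpow (a r : R) : R :=
  if Req_EM_T a 0 then 0 else Rpower a r.

Definition is_global_max_on01 (f : R -> R) (x0 : R) : Prop :=
  0 <= x0 <= 1 /\ forall x, 0 <= x <= 1 -> f x <= f x0.
Definition is_global_min_on01 (f : R -> R) (x0 : R) : Prop :=
  0 <= x0 <= 1 /\ forall x, 0 <= x <= 1 -> f x0 <= f x.

(* Main.v *)
Require Import Defs.
From Stdlib Require Import Reals Lra Psatz.
From Coquelicot Require Import Coquelicot.
Open Scope R_scope.

Lemma sin_lower3 a : 0 <= a -> a <= PI -> a - a^3/6 <= sin a.
Proof. intros. destruct (sin_bound a 0 H H0) as [H1 _].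
 unfold sin_approx in H1. simpl in H1. unfold sin_term in H1. simpl in H1. lra. Qed.

Lemma sin_lower7 a : 0 <= a -> a <= PI -> a - a^3/6 + a^5/120 - a^7/5040 <= sin a.
Proof. intros. destruct (SIN a H H0) as [H1 _].
 unfold sin_lb, sin_approx in H1. simpl in H1. unfold sin_term in H1. simpl in H1. lra. Qed.

Lemma sin_upper5 a : 0 <= a -> a <= PI -> sin a <= a - a^3/6 + a^5/120.
Proof. intros. destruct (sin_bound a 0 H H0) as [_ H1].
 unfold sin_approx in H1. simpl in H1. unfold sin_term in H1. simpl in H1. lra. Qed.

Lemma cos_lower2 a : - PI/2 <= a -> a <= PI/2 -> 1 - a^2/2 <= cos a.
Proof. intros. destruct (cos_bound a 0 H H0) as [H1 _].
 unfold cos_approx in H1. simpl in H1. unfold cos_term in H1. simpl in H1. lra. Qed.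

Lemma PI_bounds : 3.14 <= PI <= 3.1416.
Proof.
  pose proof PI_4. pose proof PI_RGT_0.
  pose proof (sin_lower7 (PI/6)) as L. pose proof (sin_upper5 (PI/6)) as U.
  pose proof (sin_lower3 (PI/6)) as L3.
  rewrite sin_PI6 in L, U, L3.
  assert (0 <= PI/6) by lra. assert (PI/6 <= PI) by lra.
  specialize (L H1 H2). specialize (U H1 H2). specialize (L3 H1 H2).
  set (a := PI/6) in *. assert (PI = 6*a) by (unfold a; field). 
  assert (0 <= a <= 1) by lra.
  assert (a <= 0.53).
  { destruct (Rle_lt_dec a 0.53) as [?|Hc]; [lra|].
    assert (0 < (a - 0.53) * (1 - (a*a + a*0.53 + 0.53*0.53)/6)).
    { apply Rmult_lt_0_compat; nra. } nra. }
  assert (a >= 0.5).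
  { assert (a^5 <= a^3) by (replace (a^5) with (a^3*(a*a)) by ring; rewrite <- (Rmult_1_r (a^3)) at 2; apply Rmult_le_compat_l; [apply pow_le; lra| nra]). 
    assert (0 <= a^3) by (apply pow_le; lra). lra. }
  split.
  - destruct (Rle_lt_dec 0.5234 a) as [?|Hc]; [lra|].
    set (b := 0.5234).
    set (Q := 1 - (a*a+a*b+b*b)/6 + (a^4+a^3*b+a^2*b^2+a*b^3+b^4)/120).
    assert (E : (b - b^3/6 + b^5/120) - (a - a^3/6 + a^5/120) = (b - a)*Q) by (unfold Q; field).
    assert (0 < Q) by (unfold Q, b; nra).
    assert (0 < (b-a)*Q) by (apply Rmult_lt_0_compat; unfold b in *; lra).
    assert (b - b^3/6 + b^5/120 < 1/2) by (unfold b; simpl; lra).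
    lra.
  - destruct (Rle_lt_dec a 0.5236) as [?|Hc]; [lra|].
    set (b := 0.5236).
    set (Q := 1 - (a*a+a*b+b*b)/6 + (a^4+a^3*b+a^2*b^2+a*b^3+b^4)/120
               - (a^6+a^5*b+a^4*b^2+a^3*b^3+a^2*b^4+a*b^5+b^6)/5040).
    assert (E : (a - a^3/6 + a^5/120 - a^7/5040) - (b - b^3/6 + b^5/120 - b^7/5040) = (a - b)*Q) by (unfold Q; field).
    assert (0 < Q) by (unfold Q, b; nra).
    assert (0 < (a-b)*Q) by (apply Rmult_lt_0_compat; unfold b in *; lra).
    assert (b - b^3/6 + b^5/120 - b^7/5040 > 1/2) by (unfold b; simpl; lra).
    lra.
Qed.

Lemma mono_deriv (f f' : R -> R) a b : a <= b ->
  (forall c, a <= c <= b -> is_derive f c (f' c)) ->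
  (forall c, a <= c <= b -> 0 <= f' c) -> f a <= f b.
Proof.
  intros Hab Hd Hp. destruct (Req_dec a b) as [->|Hne]; [lra|].
  destruct (MVT_cor2 f f' a b) as [c [Hc1 Hc2]]; [lra| |].
  - intros c Hc. apply is_derive_Reals. apply Hd. lra.
  - assert (0 <= f' c) by (apply Hp; lra). nra.
Qed.

Lemma exp_le_m x y : x <= y -> exp x <= exp y.
Proof. intros [H|H]; [left; apply exp_increasing; auto| subst; lra]. Qed.

Lemma bern R v : 1 <= R -> R * exp v <= exp (R * v) + R - 1.
Proof.
  intros HR.
  set (k := fun v => exp (R * v) - R * exp v).
  set (k' := fun v => R * exp (R * v) - R * exp v).
  assert (Hd : forall c, is_derive k c (k' c)).
  { intros c. unfold k, k'. auto_derive; auto. ring. }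
  assert (k 0 <= k v).
  { destruct (Rle_lt_dec 0 v).
    - apply (mono_deriv k k'); auto. intros c Hc. unfold k'.
      assert (exp c <= exp (R*c)). { apply exp_le_m. nra. } nra.
    - set (g := fun t => k (- t)). set (g' := fun t => - k' (- t)).
      assert (G: g 0 <= g (-v)); [apply (mono_deriv g g'); [lra| |]|].
      + intros c _. unfold g, g'. 
        unfold k, k'. auto_derive; auto. ring.
      + intros c Hc. unfold g', k'.
        assert (exp (R*(-c)) <= exp (-c)). { apply exp_le_m. nra. } nra.
      + unfold g in G. rewrite Ropp_0, Ropp_involutive in G. exact G. }
  unfold k in H. rewrite Rmult_0_r, exp_0 in H. lra.
Qed.

Lemma conc e L : 0 <= e <= 1 -> exp (e * L) <= 1 + e * (exp L - 1).
Proof.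
  intros He. destruct (Req_dec e 0) as [->|Hne].
  - rewrite Rmult_0_l, exp_0. lra.
  - assert (1 <= /e). { rewrite <- Rinv_1. apply Rinv_le_contravar; lra. }
    pose proof (bern (/e) (e*L) H) as B.
    replace (/e * (e*L)) with L in B by (field; auto).
    assert (0 < e) by lra.
    apply Rmult_le_compat_l with (r := e) in B; [|lra].
    replace (e * (/e * exp (e*L))) with (exp (e*L)) in B by (field; auto).
    replace (e * (exp L + /e - 1)) with (1 + e*(exp L - 1)) in B by (field; auto).
    lra.
Qed.

Definition Qf (r y : R) := exp y * exp (ln (1 + exp (-2*r*y)) / r) - exp y - exp (- y).

Lemma Qf_deriv_nonneg r y : 1 <= r -> 0 <= y ->
  0 <= exp y * exp (ln (1 + exp (-2*r*y)) / r) * (1 - exp (-2*r*y)) / (1 + exp (-2*r*y))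
       - exp y + exp (- y).
Proof.
  intros Hr Hy.
  set (Z := exp (-2*r*y)). set (z := exp (-2*y)).
  set (L := ln (1 + Z)). set (e := 1 - /r).
  assert (HZ : 0 < Z) by apply exp_pos. assert (Hz: 0 < z) by apply exp_pos.
  assert (HZ1 : Z <= 1). { unfold Z. rewrite <- exp_0. apply exp_le_m. nra. }
  assert (He : 0 <= e <= 1). { unfold e. assert (0 < /r <= 1). { split. apply Rinv_0_lt_compat; lra. rewrite <- Rinv_1. apply Rinv_le_contravar; lra. } lra. }
  assert (Her : e <= r - 1). { unfold e. assert (/r <= 1) by (rewrite <- Rinv_1; apply Rinv_le_contravar; lra).
     assert (r * (/r) = 1) by (field; lra).
     assert (r * (2 - r - /r) <= 0) by nra. 
     assert (2 - r - /r <= 0). { destruct (Rle_lt_dec (2 - r - /r) 0); auto. nra. } lra. }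
  assert (HL : exp L = 1 + Z) by (unfold L; apply exp_ln; lra).
  assert (HE : exp (L / r) = (1 + Z) / exp (e * L)).
  { rewrite <- HL. unfold Rdiv. rewrite <- exp_Ropp. rewrite <- exp_plus. f_equal. unfold e. field. lra. }
  pose proof (conc e L He) as C. rewrite HL in C.
  assert (Hey: exp (- y) = exp y * z). { unfold z. rewrite <- exp_plus. f_equal. ring. }
  assert (HZz : Z = z * exp (-2*(r-1)*y)). { unfold Z, z. rewrite <- exp_plus. f_equal. ring. }
  assert (Hk : 1 + e * (1 - z) <= exp (2*(r-1)*y)).
  { pose proof (exp_ineq1_le (-2*y)). fold z in H.
    pose proof (exp_ineq1_le (2*(r-1)*y)). nra. }
  assert (Hinv : exp (-2*(r-1)*y) * exp (2*(r-1)*y) = 1). { rewrite <- exp_plus. replace (_ + _) with 0 by ring. apply exp_0. }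
  assert (Hkey : Z * (1 + e*(1 - z)) <= z).
  { rewrite HZz. assert (0 < exp (-2*(r-1)*y)) by apply exp_pos. nra. }
  assert (Hpos : 0 < exp (e * L)) by apply exp_pos.
  rewrite HE, Hey.
  assert (Hey0 : 0 < exp y) by apply exp_pos.
  set (X := exp (e*L)) in *.
  replace (exp y * ((1 + Z) / X) * (1 - Z) / (1 + Z) - exp y + exp y * z)
    with (exp y * ((1 - Z) - X * (1 - z)) / X) by (field; lra).
  apply Rmult_le_pos; [| left; apply Rinv_0_lt_compat; lra].
  apply Rmult_le_pos; [lra|].
  assert (0 <= 1 - z). { unfold z. assert (exp (-2*y) <= exp 0) by (apply exp_le_m; lra). rewrite exp_0 in H. lra. }
  nra.
Qed.

Lemma Qf_mono r y : 1 <= r -> 0 <= y -> Qf r 0 <= Qf r y.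
Proof.
  intros Hr Hy.
  apply (mono_deriv (Qf r) (fun y => exp y * exp (ln (1 + exp (-2*r*y)) / r) * (1 - exp (-2*r*y)) / (1 + exp (-2*r*y))
       - exp y + exp (- y))); auto.
  - intros c _. unfold Qf. auto_derive.
    + pose proof (exp_pos (-2*r*c)). lra.
    + pose proof (exp_pos (-2*r*c)). unfold Rdiv. field. split; lra.
  - intros c Hc. apply Qf_deriv_nonneg; lra.
Qed.

Lemma lemA_ord r al be : 1 <= r -> be <= al ->
  exp al + exp be - exp (/r * ln (exp (r*al) + exp (r*be)))
   <= (2 - exp (ln 2 / r)) * exp ((al+be)/2).
Proof.
  intros Hr Hab.
  set (mu := (al+be)/2). set (y := (al-be)/2).
  assert (Hy : 0 <= y) by (unfold y; lra).
  pose proof (Qf_mono r y Hr Hy) as Q.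
  unfold Qf in Q. rewrite !Rmult_0_r, !exp_0, !Ropp_0, !exp_0 in Q.
  replace (1+1) with 2 in Q by ring.
  set (Z := exp (-2*r*y)) in *.
  assert (HZ : 0 < Z) by apply exp_pos.
  assert (Hsum : exp (r*al) + exp (r*be) = exp (r*mu + r*y) * (1 + Z)).
  { unfold Z. rewrite Rmult_plus_distr_l, Rmult_1_r, <- exp_plus. unfold mu, y. f_equal; f_equal; field. }
  rewrite Hsum. rewrite ln_mult by (try apply exp_pos; lra). rewrite ln_exp.
  replace (/ r * (r * mu + r * y + ln (1 + Z))) with (mu + (y + ln (1+Z)/r)) by (field; lra).
  rewrite exp_plus, exp_plus.
  replace al with (mu + y) by (unfold mu, y; field).
  replace be with (mu + - y) by (unfold mu, y; field).
  replace ((mu + y + (mu + - y))/2) with mu by field.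
  rewrite !exp_plus.
  assert (0 < exp mu) by apply exp_pos.
  nra.
Qed.

Lemma lemA r al be : 1 <= r ->
  exp al + exp be - exp (/r * ln (exp (r*al) + exp (r*be)))
   <= (2 - exp (ln 2 / r)) * exp ((al+be)/2).
Proof.
  intros Hr. destruct (Rle_lt_dec be al).
  - apply lemA_ord; auto.
  - rewrite (Rplus_comm (exp al)), (Rplus_comm (exp (r*al))), (Rplus_comm al).
    apply lemA_ord; auto; lra.
Qed.

Lemma polyA P u : 9.85 <= P <= 9.88 -> 0 <= u <= 1/16 -> 8 <= P * (1 - P*u/6)^2 * (1+u).
Proof. intros. 
  assert (1 - P*u/3 <= (1 - P*u/6)^2) by nra.
  assert (0.84 <= (1 - P*u/3)*(1+u)) by nra.
  assert (0.84 <= (1 - P*u/6)^2 * (1+u)) by nra.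
  nra. Qed.

Lemma polyB P u : 9.85 <= P <= 9.88 -> 0 <= u <= 1/16 -> (1-4*u)^2 <= (1 - P*u/2)^2 * (1+4*u).
Proof. intros.
  assert (E: (1 - P*u/2)^2 * (1+4*u) - (1-4*u)^2 = u * ((12 - P) + u*(P*P/4 - 4*P - 16) + P*P*u*u)) by field.
  assert (P*P/4 - 4*P - 16 >= -32) by nra.
  assert (0 <= (12 - P) + u*(P*P/4 - 4*P - 16) + P*P*u*u) by nra.
  nra. Qed.

Lemma polyC P u w S : 9.85 <= P <= 9.88 -> 0 <= u <= 1/4 -> 9/4 <= w -> 0 <= S ->
  S <= 1 - P*u*(1 - P*u/6)^2 -> S*(w+u)*w <= (w-u)^2.
Proof. intros.
  assert (0.58 <= 1 - P*u/6) by nra.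
  assert (0.33 <= (1 - P*u/6)^2) by nra.
  set (k := P * (1 - P*u/6)^2) in *.
  assert (3.2 <= k) by (unfold k; nra).
  assert (S <= 1 - k*u) by (unfold k in *; nra).
  assert (0 <= (w+u)*w) by nra.
  assert (S*((w+u)*w) <= (1-k*u)*((w+u)*w)) by (apply Rmult_le_compat_r; auto).
  assert (3 - k*w <= 0) by nra.
  assert (u*w*(3 - k*w) <= 0). { assert (0 <= u*w) by nra. nra. }
  assert (0 <= k*u*u*w). { assert (0 <= u*u) by nra. assert (0<= k*(u*u)) by nra. nra. }
  nra. Qed.

Definition S (x : R) := sin (PI * x) ^ 2.

Lemma h_val t : t <> 0 -> h t = S t / (PI^2 * t^2).
Proof. intros. unfold h, S. destruct (Req_EM_T t 0); [contradiction|].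
  pose proof PI_RGT_0. field. split; lra. Qed.

Lemma h_0 : h 0 = 1.
Proof. unfold h. destruct (Req_EM_T 0 0); [auto|contradiction]. Qed.

Lemma S_shift x n : S (x + INR n) = S x.
Proof. unfold S. induction n.
  - simpl. rewrite Rplus_0_r. auto.
  - rewrite S_INR. replace (PI * (x + (INR n + 1))) with (PI * (x + INR n) + PI) by ring.
    rewrite neg_sin. rewrite <- IHn. ring. Qed.

Lemma S_shift_neg x n : S (x - INR n) = S x.
Proof. rewrite <- (S_shift (x - INR n) n). f_equal. ring. Qed.

Lemma S_refl x : S (1 - x) = S x.
Proof. unfold S. replace (PI * (1 - x)) with (PI - PI * x) by ring. rewrite sin_PI_x. auto. Qed.

Lemma S_half : S (1/2) = 1.
Proof. unfold S. replace (PI * (1/2)) with (PI/2) by field. rewrite sin_PI2. ring. Qed.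

Lemma S_0 : S 0 = 0.
Proof. unfold S. rewrite Rmult_0_r, sin_0. ring. Qed.

Lemma S_nonneg x : 0 <= S x.
Proof. unfold S. apply pow2_ge_0. Qed.

Lemma S_le1 x : S x <= 1.
Proof. unfold S. pose proof (SIN_bound (PI*x)). nra. Qed.

Lemma S_pos x : 0 < x < 1 -> 0 < S x.
Proof. intros. unfold S. pose proof PI_RGT_0. assert (0 < sin (PI*x)) by (apply sin_gt_0; nra). nra. Qed.

Lemma S_cos d : S (1/2 - d) = cos (PI * d) ^ 2.
Proof. unfold S. replace (PI * (1/2 - d)) with (PI/2 - PI*d) by field. rewrite sin_shift. auto. Qed.

Lemma S_cos' d : S (1/2 + d) = cos (PI * d) ^ 2.
Proof. replace (1/2 + d) with (1/2 - -d) by ring. rewrite S_cos.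
  replace (PI * - d) with (- (PI*d)) by ring. rewrite cos_neg. auto. Qed.

Lemma Pb : 9.85 <= PI^2 <= 9.88.
Proof. pose proof PI_bounds. split; nra. Qed.

Lemma cos2_upper d : 0 <= d <= 1/2 -> cos (PI*d)^2 <= 1 - PI^2*d^2*(1 - PI^2*d^2/6)^2.
Proof. intros. pose proof PI_bounds.
  assert (0 <= PI*d <= PI) by nra.
  pose proof (sin_lower3 (PI*d) ltac:(lra) ltac:(lra)).
  assert (0 <= PI*d - (PI*d)^3/6).
  { assert (PI*d <= 1.6) by nra. assert ((PI*d)^2 <= 3) by (simpl; nra). 
    replace (PI*d - (PI*d)^3/6) with (PI*d*(1 - (PI*d)^2/6)) by field. 
    apply Rmult_le_pos; nra. }
  pose proof (sin2_cos2 (PI*d)). unfold Rsqr in H4.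
  assert ((PI * d - (PI * d) ^ 3 / 6)^2 <= sin (PI*d)^2).
  { apply pow_incr. lra. }
  replace (PI ^ 2 * d ^ 2 * (1 - PI ^ 2 * d ^ 2 / 6) ^ 2) with ((PI * d - (PI * d) ^ 3 / 6)^2) by field.
  simpl in *. nra.
Qed.

Lemma coreI_small x : 0 < x <= 1/4 -> 8 <= S x / x^2 + S x / (1-x)^2.
Proof.
  intros Hx. pose proof PI_bounds as HP. pose proof Pb as HPb.
  assert (0 <= PI*x <= PI) by nra.
  pose proof (sin_lower3 (PI*x) ltac:(lra) ltac:(lra)) as Hs.
  assert (Ht : 0 <= PI*x - (PI*x)^3/6).
  { assert (PI*x <= 1) by nra. assert ((PI*x)^2 <= 1) by (simpl; nra).
    replace (PI*x - (PI*x)^3/6) with (PI*x*(1 - (PI*x)^2/6)) by field.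
    apply Rmult_le_pos; nra. }
  assert (HS : (PI*x - (PI*x)^3/6)^2 <= S x) by (unfold S; apply pow_incr; lra).
  replace ((PI*x - (PI*x)^3/6)^2) with (PI^2 * x^2 * (1 - PI^2*x^2/6)^2) in HS by field.
  assert (H1 : S x <= S x / (1-x)^2).
  { pose proof (S_nonneg x). unfold Rdiv.
    assert (0 < (1-x)^2 <= 1) by (simpl; split; nra).
    assert (1 <= / (1-x)^2). { rewrite <- Rinv_1. apply Rinv_le_contravar; lra. }
    nra. }
  assert (H2 : S x / x^2 >= PI^2 * (1 - PI^2*x^2/6)^2).
  { assert (0 < x^2) by (simpl; nra). apply Rle_ge.
    apply (Rmult_le_reg_r (x^2)); auto. replace (S x / x^2 * x^2) with (S x) by (field; lra). lra. }
  pose proof (polyA (PI^2) (x^2) HPb ltac:(simpl; split; nra)).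
  assert (PI ^ 2 * (1 - PI ^ 2 * x ^ 2 / 6) ^ 2 * x^2 <= S x).
  { lra. }
  nra.
Qed.

Lemma coreI_mid x : 1/4 <= x <= 1/2 -> 8 <= S x / x^2 + S x / (1-x)^2.
Proof.
  intros Hx. pose proof PI_bounds as HP. pose proof Pb as HPb.
  set (d := 1/2 - x). assert (Hd : 0 <= d <= 1/4) by (unfold d; lra).
  replace x with (1/2 - d) by (unfold d; ring). rewrite S_cos.
  assert (-PI/2 <= PI*d) by nra. assert (PI*d <= PI/2) by nra.
  pose proof (cos_lower2 (PI*d) H H0) as Hc.
  assert (0 <= 1 - (PI*d)^2/2) by (simpl; nra).
  assert (HC : (1 - (PI*d)^2/2)^2 <= cos (PI*d)^2) by (apply pow_incr; lra).
  replace ((1 - (PI*d)^2/2)^2) with ((1 - PI^2 * d^2/2)^2) in HC by field.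
  pose proof (polyB (PI^2) (d^2) HPb ltac:(simpl; split; nra)) as PB.
  set (c := cos (PI*d)^2) in *.
  assert (E : c / (1/2 - d)^2 + c / (1 - (1/2 - d))^2 = 8 * c * (1 + 4*d^2) / (1 - 4*d^2)^2).
  { field. split; nra. }
  rewrite E.
  assert (0 < 1 - 4*d^2) by (simpl; nra).
  assert (0 < (1 - 4*d^2)^2) by (simpl; nra).
  apply (Rmult_le_reg_r ((1 - 4*d^2)^2)); auto.
  replace (8 * c * (1 + 4 * d ^ 2) / (1 - 4 * d ^ 2) ^ 2 * (1 - 4 * d ^ 2) ^ 2) with (8 * c * (1 + 4 * d ^ 2)) by (field; lra).
  assert ((1 - 4*d^2)^2 <= c * (1 + 4*d^2)).
  { assert (0 <= 1 + 4*d^2) by (simpl; nra). nra. }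
  lra.
Qed.

Lemma coreI x : 0 < x < 1 -> 8 <= S x / x^2 + S x / (1-x)^2.
Proof.
  intros Hx. destruct (Rle_lt_dec x (1/2)).
  - destruct (Rle_lt_dec x (1/4)). apply coreI_small; lra. apply coreI_mid; lra.
  - set (y := 1 - x). assert (Hy : y = 1 - x) by reflexivity. clearbody y. replace x with (1 - y) by lra. rewrite S_refl.
    replace (1 - (1 - y)) with y by ring. rewrite Rplus_comm.
    destruct (Rle_lt_dec y (1/4)). apply coreI_small; lra. apply coreI_mid; lra.
Qed.

Lemma cos2_upper_abs d : -1/2 <= d <= 1/2 -> cos (PI*d)^2 <= 1 - PI^2*d^2*(1 - PI^2*d^2/6)^2.
Proof. intros. destruct (Rle_lt_dec 0 d).
  - apply cos2_upper; lra.
  - replace (PI*d) with (- (PI * (-d))) by ring. rewrite cos_neg.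
    replace (d^2) with ((-d)^2) by ring. apply cos2_upper; lra.
Qed.

Lemma coreII M d : 3/2 <= M -> -1/2 <= d <= 1/2 ->
  cos (PI*d)^2/(M+d)^2 + cos (PI*d)^2/(M-d)^2 <= 2/M^2.
Proof.
  intros HM Hd. pose proof Pb as HPb.
  pose proof (cos2_upper_abs d Hd) as Hc.
  set (c := cos (PI*d)^2) in *.
  assert (Hc0 : 0 <= c) by (unfold c; apply pow2_ge_0).
  pose proof (polyC (PI^2) (d^2) (M^2) c HPb ltac:(simpl; split; nra) ltac:(simpl; nra) Hc0 Hc) as HC.
  assert (0 < M + d) by lra. assert (0 < M - d) by lra.
  assert (E : c/(M+d)^2 + c/(M-d)^2 = 2 * c * (M^2 + d^2) / ((M^2 - d^2)^2)).
  { assert (0 < M^2 - d^2) by (simpl; nra). field. repeat split; lra. }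
  rewrite E.
  assert (0 < M^2 - d^2) by (simpl; nra).
  assert (0 < (M^2 - d^2)^2) by (simpl; nra).
  assert (0 < M^2) by (simpl; nra).
  apply (Rmult_le_reg_r ((M^2 - d^2)^2 * M^2)). nra.
  replace (2 * c * (M ^ 2 + d ^ 2) / (M ^ 2 - d ^ 2) ^ 2 * ((M ^ 2 - d ^ 2) ^ 2 * M ^ 2))
    with (2 * (c * (M^2 + d^2) * M^2)) by (field; lra).
  replace (2 / M ^ 2 * ((M ^ 2 - d ^ 2) ^ 2 * M ^ 2)) with (2 * (M^2 - d^2)^2) by (field; lra).
  replace (d^2 + M^2) with (M^2 + d^2) in HC by ring.
  lra.
Qed.

Lemma lemB_small x : 0 < x <= 1/4 -> S x <= 4*x*(1-x).
Proof. intros. pose proof PI_bounds. pose proof Pb.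
  assert (0 <= PI*x <= PI) by nra.
  pose proof (sin_upper5 (PI*x) ltac:(lra) ltac:(lra)).
  assert (0 <= sin (PI*x)) by (apply sin_ge_0; lra).
  assert ((PI*x)^5/120 <= (PI*x)^3/6).
  { assert (PI*x <= 1) by nra. assert (0 <= (PI*x)^3) by (apply pow_le; lra).
    replace ((PI*x)^5) with ((PI*x)^3 * ((PI*x)*(PI*x))) by ring.
    assert ((PI*x)*(PI*x) <= 1) by nra. nra. }
  assert (sin (PI*x) <= PI*x) by lra.
  unfold S. assert (sin (PI*x)^2 <= (PI*x)^2) by (apply pow_incr; lra).
  assert ((PI*x)^2 = PI^2 * x * x) by ring.
  assert (PI^2 * x <= 4*(1-x)) by nra.
  nra.
Qed.

Lemma lemB x : 0 < x < 1 -> S x <= 4*x*(1-x).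
Proof. intros Hx. pose proof Pb.
  destruct (Rle_lt_dec x (1/4)); [apply lemB_small; lra|].
  destruct (Rle_lt_dec (3/4) x).
  { replace x with (1 - (1-x)) by ring. rewrite S_refl. replace (1 - (1-x)) with x by ring.
    replace (4*x*(1-x)) with (4*(1-x)*(1-(1-x))) by ring. apply lemB_small; lra. }
  set (d := x - 1/2). replace x with (1/2 + d) by (unfold d; ring). rewrite S_cos'.
  assert (-1/2 <= d <= 1/2) by (unfold d; lra).
  pose proof (cos2_upper_abs d H0).
  assert (d^2 <= 1/16) by (unfold d; simpl; nra).
  assert (0 <= d^2) by (simpl; nra).
  assert (0.8 <= 1 - PI^2*d^2/6) by nra.
  assert (0.64 <= (1 - PI^2*d^2/6)^2) by nra.
  assert (4 <= PI^2 * (1 - PI^2*d^2/6)^2) by nra.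
  replace (4 * (1/2 + d) * (1 - (1/2 + d))) with (1 - 4*d^2) by field.
  nra.
Qed.

Lemma Pgt0 : 0 < PI^2.
Proof. pose proof PI_RGT_0. simpl. nra. Qed.

Lemma h_half : h (1/2) = 4 / PI^2.
Proof. rewrite h_val by lra. rewrite S_half. pose proof PI_RGT_0. field. lra. Qed.

Lemma h_halfm : h (1/2 - 1) = 4 / PI^2.
Proof. rewrite h_val by lra. change 1 with (INR 1) at 2. rewrite S_shift_neg, S_half.
  pose proof PI_RGT_0. simpl. field. lra. Qed.

Lemma h_in x : 0 < x < 1 -> h x = S x / (PI^2 * x^2).
Proof. intros. apply h_val. lra. Qed.

Lemma h_in1 x : 0 < x < 1 -> h (x - 1) = S x / (PI^2 * (1-x)^2).
Proof. intros. rewrite h_val by lra. change 1 with (INR 1) at 1. rewrite S_shift_neg.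
  simpl. f_equal. ring. Qed.

Lemma h_m1 x m : 0 <= x -> (1 <= m)%nat -> h (x + INR m) = S x / (PI^2 * (x + INR m)^2).
Proof. intros. apply le_INR in H0. simpl in H0. rewrite h_val by lra. rewrite S_shift. auto. Qed.

Lemma h_m2 x m : x <= 1 -> (1 <= m)%nat -> h (x - (INR m + 1)) = S x / (PI^2 * (x - (INR m + 1))^2).
Proof. intros. apply le_INR in H0. simpl in H0. rewrite h_val by lra.
  rewrite <- S_INR. rewrite S_shift_neg. auto. Qed.

Lemma h_0m1 : h (0 - 1) = 0.
Proof. rewrite h_val by lra. change 1 with (INR 1). rewrite S_shift_neg, S_0. simpl. field.
  pose proof PI_RGT_0. lra. Qed.

Lemma h_1 : h 1 = 0.
Proof. rewrite h_val by lra. replace 1 with (0 + INR 1) by (simpl; ring). rewrite S_shift, S_0.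
  simpl. field. pose proof PI_RGT_0. lra. Qed.

Lemma sum_in x : 0 < x < 1 -> h x + h (x - 1) = (S x / x^2 + S x / (1-x)^2) / PI^2.
Proof. intros. rewrite h_in, h_in1 by lra. pose proof PI_RGT_0. field. split; lra. Qed.

Lemma part1 : is_global_min_on01 (fun x => h x + h (x - 1)) (1/2).
Proof.
  split; [lra|]. intros x Hx. pose proof Pgt0. pose proof Pb.
  rewrite h_half, h_halfm.
  replace (4/PI^2 + 4/PI^2) with (8/PI^2) by (field; pose proof PI_RGT_0; lra).
  destruct (Req_dec x 0) as [->|Hx0].
  { rewrite h_0, h_0m1. apply (Rmult_le_reg_r (PI^2)); auto.
    replace (8/PI^2*PI^2) with 8 by (field; pose proof PI_RGT_0; lra). lra. }
  destruct (Req_dec x 1) as [->|Hx1].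
  { replace (1-1) with 0 by ring. rewrite h_0, h_1. apply (Rmult_le_reg_r (PI^2)); auto.
    replace (8/PI^2*PI^2) with 8 by (field; pose proof PI_RGT_0; lra). lra. }
  rewrite sum_in by lra. pose proof (coreI x ltac:(lra)).
  unfold Rdiv at 2. unfold Rdiv. apply Rmult_le_compat_r; [left; apply Rinv_0_lt_compat; lra | lra].
Qed.

Lemma sum2 x m : 0 <= x <= 1 -> (1 <= m)%nat ->
  h (x + INR m) + h (x - (INR m + 1)) = (S x / (x + INR m)^2 + S x / (INR m + 1 - x)^2) / PI^2.
Proof. intros. rewrite h_m1, h_m2 by (auto; lra). apply le_INR in H0. simpl in H0.
  pose proof PI_RGT_0. field. repeat split; lra. Qed.

Lemma T_bound x m : 0 <= x <= 1 -> (1 <= m)%nat ->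
  h (x + INR m) + h (x - (INR m + 1)) <= 2 / (PI^2 * (INR m + 1/2)^2).
Proof.
  intros Hx Hm. rewrite sum2 by auto. pose proof (le_INR _ _ Hm) as Hm'. simpl in Hm'.
  set (M := INR m + 1/2). set (d := x - 1/2).
  replace x with (1/2 + d) by (unfold d; ring). rewrite S_cos'.
  replace (1/2 + d + INR m) with (M + d) by (unfold M; ring).
  replace (INR m + 1 - (1/2 + d)) with (M - d) by (unfold M; field).
  pose proof (coreII M d ltac:(unfold M; lra) ltac:(unfold d; lra)).
  pose proof Pgt0.
  replace (2 / (PI^2 * M^2)) with ((2 / M^2) / PI^2) by (field; split; [unfold M; lra| pose proof PI_RGT_0; lra]).
  unfold Rdiv at 1. unfold Rdiv at 3. apply Rmult_le_compat_r; [left; apply Rinv_0_lt_compat; lra|].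
  exact H.
Qed.

Lemma T_half m : (1 <= m)%nat ->
  h (1/2 + INR m) + h (1/2 - (INR m + 1)) = 2 / (PI^2 * (INR m + 1/2)^2).
Proof. intros. rewrite sum2 by (auto; lra). rewrite S_half. apply le_INR in H. simpl in H.
  pose proof PI_RGT_0. field. split; lra. Qed.

Lemma part2 m : (1 <= m)%nat ->
  is_global_max_on01 (fun x => h (x + INR m) + h (x - (INR m + 1))) (1/2).
Proof. intros. split; [lra|]. intros x Hx. rewrite T_half by auto. apply T_bound; auto. Qed.

Lemma ln_le_m x y : 0 < x -> x <= y -> ln x <= ln y.
Proof. intros. destruct H0 as [H0|H0]; [left; apply ln_increasing; auto| subst; lra]. Qed.

Lemma exp_minus x y : exp (x - y) = exp x / exp y.
Proof. unfold Rminus, Rdiv. rewrite exp_plus, exp_Ropp. auto. Qed.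

Lemma ln2_pos : 0 < ln 2.
Proof. rewrite <- ln_1. apply ln_increasing; lra. Qed.

Lemma rpow_pos_eq a r : 0 < a -> rpow a r = exp (r * ln a).
Proof. intros. unfold rpow. destruct (Req_EM_T a 0); [lra|]. reflexivity. Qed.

Lemma rpow_0 r : rpow 0 r = 0.
Proof. unfold rpow. destruct (Req_EM_T 0 0); [auto|contradiction]. Qed.

Lemma PM r a b : 1 <= r -> 0 < a -> 0 < b ->
  2 * exp (r * ln ((a+b)/2)) <= exp (r * ln a) + exp (r * ln b).
Proof.
  intros Hr Ha Hb. set (m := (a+b)/2). assert (Hm : 0 < m) by (unfold m; lra).
  set (l := ln m).
  pose proof (bern r (ln a - l) Hr) as B1. pose proof (bern r (ln b - l) Hr) as B2.
  assert (E1 : exp (ln a - l) = a / m) by (unfold l; rewrite exp_minus, !exp_ln; auto).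
  assert (E2 : exp (ln b - l) = b / m) by (unfold l; rewrite exp_minus, !exp_ln; auto).
  assert (F1 : exp (r * (ln a - l)) = exp (r * ln a) / exp (r * l)).
  { rewrite <- exp_minus. f_equal. ring. }
  assert (F2 : exp (r * (ln b - l)) = exp (r * ln b) / exp (r * l)).
  { rewrite <- exp_minus. f_equal. ring. }
  rewrite E1, F1 in B1. rewrite E2, F2 in B2.
  assert (a/m + b/m = 2) by (unfold m; field; lra).
  assert (Hp : 0 < exp (r*l)) by apply exp_pos.
  assert (2 <= (exp (r*ln a) + exp (r * ln b)) / exp (r*l)).
  { unfold Rdiv in *. nra. }
  apply (Rmult_le_compat_r (exp (r*l))) in H0; [|lra].
  replace ((exp (r * ln a) + exp (r * ln b)) / exp (r * l) * exp (r * l)) with (exp (r * ln a) + exp (r * ln b)) in H0 by (field; lra).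
  lra.
Qed.

Lemma G4 r a b c : 1 <= r -> 0 <= a -> 0 <= b -> 0 < c -> a + b <= 2*c ->
  rpow (a+b) r - rpow a r - rpow b r <= rpow (c + c) r - rpow c r - rpow c r.
Proof.
  intros Hr Ha Hb Hc Hab.
  rewrite !(rpow_pos_eq c) by lra. rewrite (rpow_pos_eq (c+c)) by lra.
  set (q := exp (- (r * ln 2))).
  assert (Hq : q <= 1/2).
  { unfold q. replace (1/2) with (exp (- ln 2)).
    - apply exp_le_m. pose proof ln2_pos. nra.
    - rewrite exp_Ropp, exp_ln by lra. field. }
  assert (HC : exp (r * ln c) = exp (r * ln (c+c)) * q).
  { unfold q. rewrite <- exp_plus. f_equal. replace (c+c) with (2*c) by ring.
    rewrite ln_mult by lra. ring. }
  rewrite HC.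
  set (E := exp (r * ln (c+c))).
  assert (HE : 0 < E) by apply exp_pos.
  destruct (Req_dec a 0) as [->|Ha0].
  { rewrite Rplus_0_l, rpow_0. nra. }
  destruct (Req_dec b 0) as [->|Hb0].
  { rewrite Rplus_0_r, rpow_0. nra. }
  rewrite !rpow_pos_eq by lra.
  pose proof (PM r a b Hr ltac:(lra) ltac:(lra)) as HP.
  assert (HM : exp (r * ln ((a+b)/2)) = exp (r * ln (a+b)) * q).
  { unfold q. rewrite <- exp_plus. f_equal. unfold Rdiv. rewrite ln_mult by (try apply Rinv_0_lt_compat; lra).
    rewrite ln_Rinv by lra. ring. }
  rewrite HM in HP.
  assert (exp (r * ln (a+b)) <= E).
  { unfold E. apply exp_le_m. apply Rmult_le_compat_l; [lra|]. apply ln_le_m; lra. }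
  nra.
Qed.

Lemma h_nonneg t : 0 <= h t.
Proof. unfold h. destruct (Req_EM_T t 0); [lra| apply pow2_ge_0]. Qed.

Lemma h_half_m1 m : (1 <= m)%nat -> h (1/2 + INR m) = 1 / (PI^2 * (INR m + 1/2)^2).
Proof. intros. rewrite h_m1 by (auto; lra). rewrite S_half. f_equal. f_equal. ring. Qed.

Lemma h_half_m2 m : (1 <= m)%nat -> h (1/2 - (INR m + 1)) = 1 / (PI^2 * (INR m + 1/2)^2).
Proof. intros. rewrite h_m2 by (auto; lra). rewrite S_half. f_equal. f_equal. field. Qed.

Lemma part4 r m : 1 <= r -> (1 <= m)%nat ->
  is_global_max_on01
    (fun x => rpow (h (x + INR m) + h (x - (INR m + 1))) r
              - rpow (h (x + INR m)) r - rpow (h (x - (INR m + 1))) r) (1/2).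
Proof.
  intros Hr Hm. split; [lra|]. intros x Hx. simpl.
  rewrite h_half_m1, h_half_m2 by auto.
  pose proof (le_INR _ _ Hm) as Hm'. simpl in Hm'.
  apply G4; auto using h_nonneg.
  - pose proof Pgt0. apply Rdiv_lt_0_compat; [lra|]. apply Rmult_lt_0_compat; auto. simpl; nra.
  - pose proof (T_bound x m Hx Hm). replace (2 * (1 / (PI ^ 2 * (INR m + 1 / 2) ^ 2))) with (2 / (PI ^ 2 * (INR m + 1 / 2) ^ 2)) by (field; split; [lra| pose proof PI_RGT_0; lra]).
    auto.
Qed.

Lemma rpow1 r : rpow 1 r = 1.
Proof. rewrite rpow_pos_eq by lra. rewrite ln_1, Rmult_0_r, exp_0. auto. Qed.

Lemma F_half_val r : 1 <= r ->
  h (1/2) + h (1/2 - 1) - rpow (rpow (h (1/2)) r + rpow (h (1/2 - 1)) r) (/ r)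
  = (4/PI^2) * (2 - exp (ln 2 / r)).
Proof.
  intros Hr. rewrite h_half, h_halfm. pose proof Pgt0.
  set (c := 4/PI^2). assert (Hc : 0 < c) by (unfold c; apply Rdiv_lt_0_compat; lra).
  rewrite !(rpow_pos_eq c r Hc).
  rewrite rpow_pos_eq by (pose proof (exp_pos (r * ln c)); lra).
  replace (exp (r * ln c) + exp (r * ln c)) with (2 * exp (r * ln c)) by ring.
  rewrite ln_mult by (try apply exp_pos; lra). rewrite ln_exp.
  replace (/ r * (ln 2 + r * ln c)) with (ln 2 / r + ln c) by (field; lra).
  rewrite exp_plus, exp_ln by auto. ring.
Qed.

Lemma two_minus_pos r : 1 <= r -> 0 <= 2 - exp (ln 2 / r).
Proof. intros. assert (exp (ln 2 / r) <= exp (ln 2)).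
  { apply exp_le_m. pose proof ln2_pos. apply (Rmult_le_reg_r r); [lra|].
    replace (ln 2 / r * r) with (ln 2) by (field; lra). nra. }
  rewrite exp_ln in H0 by lra. lra. Qed.

Lemma part3 r : 1 <= r ->
  is_global_max_on01
    (fun x => h x + h (x - 1) - rpow (rpow (h x) r + rpow (h (x - 1)) r) (/ r)) (1/2).
Proof.
  intros Hr. split; [lra|]. intros x Hx. rewrite F_half_val by auto.
  pose proof (two_minus_pos r Hr) as H2. pose proof Pgt0.
  assert (Hc : 0 < 4/PI^2) by (apply Rdiv_lt_0_compat; lra).
  destruct (Req_dec x 0) as [->|Hx0].
  { rewrite h_0, h_0m1, rpow_0, rpow1, Rplus_0_r, rpow1. nra. }
  destruct (Req_dec x 1) as [->|Hx1].
  { replace (1-1) with 0 by ring. rewrite h_0, h_1, rpow_0, rpow1, Rplus_0_l, rpow1. nra. }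
  assert (Hx' : 0 < x < 1) by lra.
  assert (Ha : 0 < h x). { rewrite h_in by auto. pose proof (S_pos x Hx'). apply Rdiv_lt_0_compat; auto. apply Rmult_lt_0_compat; [lra|simpl; nra]. }
  assert (Hb : 0 < h (x-1)). { rewrite h_in1 by auto. pose proof (S_pos x Hx'). apply Rdiv_lt_0_compat; auto. apply Rmult_lt_0_compat; [lra|simpl; nra]. }
  set (a := h x) in *. set (b := h (x-1)) in *.
  rewrite (rpow_pos_eq a), (rpow_pos_eq b) by auto.
  rewrite rpow_pos_eq by (pose proof (exp_pos (r * ln a)); pose proof (exp_pos (r * ln b)); lra).
  pose proof (lemA r (ln a) (ln b) Hr) as LA. rewrite !exp_ln in LA by auto.
  assert (Hmu : exp ((ln a + ln b)/2) <= 4/PI^2).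
  { assert (Hab : a * b <= (4/PI^2)^2).
    { unfold a, b. rewrite h_in, h_in1 by auto. pose proof (lemB x Hx'). pose proof (S_nonneg x).
      assert (S x * S x <= (4*x*(1-x))*(4*x*(1-x))) by nra.
      replace (S x / (PI ^ 2 * x ^ 2) * (S x / (PI ^ 2 * (1 - x) ^ 2))) with ((S x * S x) / (PI^2 * x * (1-x))^2) by (pose proof PI_RGT_0; field; repeat split; lra).
      replace ((4/PI^2)^2) with ((4*x*(1-x))*(4*x*(1-x)) / (PI^2 * x * (1-x))^2) by (pose proof PI_RGT_0; field; repeat split; lra).
      apply Rmult_le_compat_r; auto. left. apply Rinv_0_lt_compat. assert (0 < PI^2*x*(1-x)) by (apply Rmult_lt_0_compat; nra). simpl; nra. }
    assert (exp ((ln a + ln b)/2) * exp ((ln a + ln b)/2) = a * b).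
    { rewrite <- exp_plus. replace ((ln a + ln b)/2 + (ln a + ln b)/2) with (ln a + ln b) by field.
      rewrite exp_plus, !exp_ln; auto. }
    pose proof (exp_pos ((ln a + ln b)/2)). nra. }
  assert ((2 - exp (ln 2 / r)) * exp ((ln a + ln b)/2) <= (2 - exp (ln 2 / r)) * (4/PI^2)).
  { apply Rmult_le_compat_l; auto. }
  lra.
Qed.

Theorem lemma5 (r : R) (hr : 1 <= r) :
  is_global_min_on01 (fun x => h x + h (x - 1)) (1/2)
  /\ (forall m : nat, (1 <= m)%nat ->
        is_global_max_on01 (fun x => h (x + INR m) + h (x - (INR m + 1))) (1/2))
  /\ is_global_max_on01
       (fun x => h x + h (x - 1) - rpow (rpow (h x) r + rpow (h (x - 1)) r) (/ r))
       (1/2)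
  /\ (forall m : nat, (1 <= m)%nat ->
        is_global_max_on01
          (fun x => rpow (h (x + INR m) + h (x - (INR m + 1))) r
                    - rpow (h (x + INR m)) r - rpow (h (x - (INR m + 1))) r)
          (1/2)).
Proof.
  split; [apply part1|]. split; [apply part2|]. split; [apply part3; auto|].
  intros m Hm. apply part4; auto.
Qed.
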